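(* Let $W\in L^\infty$ and $(X_t)_{t\in\mathbb{T}}\in\mathcal{A}(W)$. Then $(X_t)$ is Pareto optimal if and only if there exists $\lambda\in(0,\infty)^T$ such that $(X_t)$ solves Problem $\mathrm{P}_\lambda$.
   Context: Let $T\ge 1$ be an integer and $\mathbb{T}=\{1,\dots,T\}$. Let $(\Omega,\mathcal{F},(\mathcal{F}_t)_{t\in\{0,1,\dots,T\}},P)$ be a filtered probability space and $L^{\infty}=L^{\infty}(\Omega,\mathcal{F}_T,P)$. Let $(r_t)_{t\in\mathbb{T}}$ be a bounded, nonnegative, predictable process ($r_t$ is $\mathcal{F}_{t-1}$-measurable), $B_0=1$, $B_t=\prod_{k=1}^t(1+r_k)$, and for a process $(X_t)$ write $\tilde X_t=X_t/B_t$. For $W\in L^\infty$, $\mathcal{A}(W)$ is the set of $(\mathcal{F}_t)$-adapted processes $(Y_t)_{t\in\mathbb{T}}$ with $Y_t\in L^\infty$ for all $t$ and $\sum_{t\in\mathbb{T}}\tilde Y_t=W$ a.s. For each $t\in\mathbb{T}$, $u_t:\mathbb{R}\to\mathbb{R}$ is strictly concave, $C^1$, with $u_t'(x)>0$ for all $x$. For $\lambda\in\mathbb{R}_+^T\setminus\{0\}$, Problem $\mathrm{P}_\lambda$ is: maximize $\sum_{t\in\mathbb{T}}\lambda_tE[u_t(\tilde Y_t)]$ over $(Y_t)\in\mathcal{A}(W)$. An allocation $(X_t)\in\mathcal{A}(W)$ is Pareto optimal if there is no $(Y_t)\in\mathcal{A}(W)$ with $E[u_t(\tilde Y_t)]\ge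 E[u_t(\tilde X_t)]$ for all $t\in\mathbb{T}$ and $E[u_{t_0}(\tilde Y_{t_0})]>E[u_{t_0}(\tilde X_{t_0})]$ for at least one $t_0\in\mathbb{T}$. *)

(* Defs.v *)
From mathcomp Require Import all_boot all_order all_algebra.
From mathcomp Require Import all_classical all_reals all_analysis.
Set Implicit Arguments. Unset Strict Implicit. Unset Printing Implicit Defensive.
Import Order.TTheory GRing.Theory Num.Theory.
Import numFieldNormedType.Exports.
Local Open Scope classical_set_scope.
Local Open Scope ring_scope.

Section Defs.
Context {d : measure_display} {Omega : measurableType d} {R : realType}.

Definition measurable_wrt (G : set (set Omega)) (f : Omega -> R) :=
  forall B : set R, measurable B -> G (f @^-1` B).

Definition filtration (T : nat) (F : nat -> set (set Omega)) :=
  [/\ (forall t, (t <= T)%N -> sigma_algebra setT (F t)),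
      (forall t, (t <= T)%N -> F t `<=` measurable) &
      (forall s t, (s <= t <= T)%N -> F s `<=` F t)].

Definition Linfty (P : probability Omega R) (G : set (set Omega))
    (f : Omega -> R) :=
  measurable_wrt G f /\ exists M : R, {ae P, forall w, `|f w| <= M}.

Definition bank (r : nat -> Omega -> R) (t : nat) (w : Omega) : R :=
  \prod_(1 <= k < t.+1) (1 + r k w).

Definition disc (r : nat -> Omega -> R) (X : nat -> Omega -> R) t w : R :=
  X t w / bank r t w.

(* the set A(W) of admissible allocations (indices t = 1..T are relevant) *)
Definition admissible (P : probability Omega R) (T : nat)
    (F : nat -> set (set Omega)) (r : nat -> Omega -> R)
    (W : Omega -> R) (Y : nat -> Omega -> R) :=
  (forall t, (1 <= t <= T)%N -> measurable_wrt (F t) (Y t) /\ Linfty P (F T) (Y t))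
  /\ {ae P, forall w, \sum_(1 <= t < T.+1) disc r Y t w = W w}.

Definition expected_utility (P : probability Omega R)
    (u : nat -> R -> R) (r : nat -> Omega -> R) (X : nat -> Omega -> R) t
    : \bar R :=
  (\int[P]_w (u t (disc r X t w))%:E)%E.

Definition pareto_optimal (P : probability Omega R) (T : nat)
    (F : nat -> set (set Omega)) (r : nat -> Omega -> R)
    (u : nat -> R -> R) (W : Omega -> R) (X : nat -> Omega -> R) :=
  admissible P T F r W X /\
  ~ exists Y, admissible P T F r W Y /\
      (forall t, (1 <= t <= T)%N ->
         (expected_utility P u r X t <= expected_utility P u r Y t)%E) /\
      (exists t0, (1 <= t0 <= T)%N /\
         (expected_utility P u r X t0 < expected_utility P u r Y t0)%E).

Definition solves_P (P : probability Omega R) (T : nat)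
    (F : nat -> set (set Omega)) (r : nat -> Omega -> R)
    (u : nat -> R -> R) (W : Omega -> R) (lam : nat -> R)
    (X : nat -> Omega -> R) :=
  admissible P T F r W X /\
  forall Y, admissible P T F r W Y ->
    (\sum_(1 <= t < T.+1) ((lam t)%:E * expected_utility P u r Y t)
      <= \sum_(1 <= t < T.+1) ((lam t)%:E * expected_utility P u r X t))%E.

End Defs.

Definition strictly_concave {R : realType} (f : R -> R) :=
  forall x y : R, x != y -> forall a : R, 0 < a < 1 ->
    a * f x + (1 - a) * f y < f (a * x + (1 - a) * y).

Definition C1_increasing {R : realType} (f : R -> R) :=
  (forall x : R, derivable f x 1) /\ continuous (derive1 f) /\
  (forall x : R, 0 < derive1 f x).

(* Main.v *)
Require Import Defs.
From mathcomp Require Import all_boot all_order all_algebra.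
From mathcomp Require Import all_classical all_reals all_analysis.
From mathcomp Require Import ring lra measurable_realfun.
Import Order.TTheory GRing.Theory Num.Theory.
Import numFieldNormedType.Exports.
Local Open Scope classical_set_scope.
Local Open Scope ring_scope.
Lemma tangent_ineq {R : realType} (u : R -> R) : strictly_concave u ->
  (forall x, derivable u x 1) -> forall x y, u y <= u x + derive1 u x * (y - x).
Proof.
move=> hc hd x y.
have [->|yx] := eqVneq y x; first by rewrite subrr mulr0 addr0.
set del := y - x.
have del0 : del != 0 by rewrite subr_eq0.
have hD : (fun h : R => h^-1 *: ((u \o shift x) (h *: 1) - u x)) @ 0^' --> 'D_1 u x.
  exact: (hd x).
pose hs (n : nat) : R := del * ((n.+1%:R)^-1 / 2).
have hsn0 n : hs n != 0.
  by rewrite /hs mulf_neq0 // mulf_neq0 // ?invr_eq0 ?pnatr_eq0.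
have hs0 : hs n @[n --> \oo] --> (0:R).
  rewrite /hs -(mulr0 del); apply: cvgMr.
  rewrite -(mul0r (2^-1 : R)); apply: cvgMl.
  exact: (@cvg_harmonic R).
have := (cvgr_dnbhsP _ 0 _).1 hD hs (conj hsn0 hs0) => hq.
rewrite derive1E -lerBlDl mulrC.
have hl : (fun n => del * ((hs n)^-1 *: ((u \o shift x) (hs n *: 1) - u x))) @ \oo --> del * 'D_1 u x.
  exact: cvgMr.
apply: (cvgr_to_ge hl).
apply: nearW => n /=.
set s : R := (n.+1%:R)^-1 / 2.
have hn0 : 0 < (n.+1%:R)^-1 :> R by rewrite invr_gt0 ltr0n.
have hn1 : (n.+1%:R)^-1 <= 1 :> R by rewrite invf_le1 ?ltr0n // ler1n.
have s0 : 0 < s by rewrite /s divr_gt0.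
have s1 : s < 1.
  rewrite /s ltr_pdivrMr // mul1r (le_lt_trans hn1) // ltr1n //.
have hcc := hc y x yx s (andb_true_intro (conj s0 s1)).
have -> : (hs n)%:A + x = s * y + (1 - s) * x.
  by rewrite /hs -/s /GRing.scale /= mulr1 /del; ring.
have -> : del * ((hs n)^-1 *: (u (s * y + (1 - s) * x) - u x))
    = s^-1 * (u (s * y + (1 - s) * x) - u x).
  rewrite /GRing.scale /= /hs -/s mulrA invfM mulrA mulfV // mul1r.
  by rewrite mulrC.
rewrite ler_pdivlMl //; lra.
Qed.
Section Ebd.
Context {R : realType} {d : measure_display} {Omega : measurableType d} (P : probability Omega R).

Definition ebd (f : Omega -> R) :=
  measurable_fun setT f /\ exists M, {ae P, forall w, `|f w| <= M}.

Lemma aeand (A B : Omega -> Prop) : {ae P, forall w, A w} ->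
  {ae P, forall w, B w} -> {ae P, forall w, A w /\ B w}.
Proof. by move=> hA hB; apply: filterS2 hA hB. Qed.

Lemma ebd_int f : ebd f -> P.-integrable setT (EFin \o f).
Proof.
move=> [mf [M hM]]; apply/integrableP; split; first exact/measurable_realfun.measurable_EFinP.
apply: (@le_lt_trans _ _ ((`|M|)%:E * P setT)%E).
  apply: integral_le_bound => //.
  - exact/measurable_realfun.measurable_EFinP.
  - by apply: filterS hM => w hw _ /=; rewrite lee_fin (le_trans hw) // ler_norm.
by rewrite probability_setT mule1 ltry.
Qed.

Lemma ebd_cst c : ebd (fun _ => c).
Proof. split; first exact: measurable_cst. by exists `|c|; apply: nearW. Qed.

Lemma ebdD f g : ebd f -> ebd g -> ebd (fun w => f w + g w).
Proof.
move=> [mf [M hM]] [mg [N hN]]; split; first exact: measurable_realfun.measurable_funD.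
exists (M + N); apply: filterS2 hM hN => w h1 h2.
by rewrite (le_trans (ler_normD _ _)) // lerD.
Qed.

Lemma ebdM f g : ebd f -> ebd g -> ebd (fun w => f w * g w).
Proof.
move=> [mf [M hM]] [mg [N hN]]; split; first exact: measurable_realfun.measurable_funM.
exists (`|M| * `|N|); apply: filterS2 hM hN => w h1 h2.
rewrite normrM ler_pM //; apply: (le_trans _ (ler_norm _)) => //.
Qed.

Lemma ebdN f : ebd f -> ebd (fun w => - f w).
Proof.
move=> [mf [M hM]]; split; first exact: measurableT_comp.
by exists M; apply: filterS hM => w; rewrite normrN.
Qed.

Lemma cont_bdd (phi : R -> R) : continuous phi ->
  forall M, exists K, forall x, `|x| <= M -> `|phi x| <= K.
Proof.
move=> cphi M.
have [hM|hM] := leP 0 M; last first.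
  by exists 0 => x hx; exfalso; move: (le_lt_trans (normr_ge0 x) (le_lt_trans hx hM)); rewrite ltxx.
have hm : - M <= M by lra.
have cn : {within `[- M, M], continuous (fun x => `|phi x|)}.
  apply: continuous_subspaceT => x; apply: continuous_comp; first exact: cphi.
  exact: norm_continuous.
have [c _ hc] := EVT_max hm cn.
exists `|phi c| => x hx; apply: (hc x).
by rewrite in_itv /= -ler_norml.
Qed.

Lemma ebd_comp (phi : R -> R) f : continuous phi -> ebd f -> ebd (fun w => phi (f w)).
Proof.
move=> cphi [mf [M hM]]; split.
  exact: (measurableT_comp (measurable_realfun.continuous_measurable_fun cphi) mf).
have [K hK] := cont_bdd _ cphi M.
by exists K; apply: filterS hM => w /hK.
Qed.

End Ebd.
Section Mwrt.
Context {R : realType} {d : measure_display} {Omega : measurableType d}.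

Lemma mwrtP (G : set (set Omega)) (f : Omega -> R) : sigma_algebra setT G ->
  measurable_wrt G f <-> @measurable_fun _ _ (g_sigma_algebraType G) R setT f.
Proof.
move=> sG; split.
  move=> h _ B mB; rewrite setTI.
  have -> : (measurable : set (set (g_sigma_algebraType G))) = G.
    exact: measurable_g_measurableTypeE.
  exact: h.
move=> h B mB; have := h measurableT B mB; rewrite setTI.
by rewrite measurable_g_measurableTypeE.
Qed.

Lemma mwrt_meas (G : set (set Omega)) (f : Omega -> R) : G `<=` measurable ->
  measurable_wrt G f -> measurable_fun setT f.
Proof. by move=> sub h _ B mB; rewrite setTI; apply: sub; apply: h. Qed.

Lemma mwrt_sub (G H : set (set Omega)) (f : Omega -> R) : G `<=` H ->
  measurable_wrt G f -> measurable_wrt H f.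
Proof. by move=> sub h B mB; apply: sub; apply: h. Qed.

Lemma mwrtD (G : set (set Omega)) (f g : Omega -> R) : sigma_algebra setT G ->
  measurable_wrt G f -> measurable_wrt G g -> measurable_wrt G (fun w => f w + g w).
Proof.
move=> sG /(mwrtP _ _ sG) hf /(mwrtP _ _ sG) hg; apply/(mwrtP _ _ sG).
exact: measurable_realfun.measurable_funD.
Qed.

Lemma mwrtM (G : set (set Omega)) (f g : Omega -> R) : sigma_algebra setT G ->
  measurable_wrt G f -> measurable_wrt G g -> measurable_wrt G (fun w => f w * g w).
Proof.
move=> sG /(mwrtP _ _ sG) hf /(mwrtP _ _ sG) hg; apply/(mwrtP _ _ sG).
exact: measurable_realfun.measurable_funM.
Qed.

Lemma mwrt_cst (G : set (set Omega)) (c : R) : sigma_algebra setT G ->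
  measurable_wrt G (fun _ => c).
Proof. by move=> sG; apply/(mwrtP _ _ sG); exact: measurable_cst. Qed.

Lemma contV1 : continuous (fun x : R => (Num.max x 1)^-1).
Proof.
move=> x; apply: (@continuousV _ R^o (fun x : R => Num.max x 1)).
  by rewrite gt_eqF // (lt_le_trans ltr01) // le_max lexx orbT.
apply: (@continuous_max _ R^o id (fun=> 1)); first exact: cvg_id.
exact: cvg_cst.
Qed.

Lemma mwrtV1 (G : set (set Omega)) (f : Omega -> R) : sigma_algebra setT G ->
  measurable_wrt G f -> measurable_wrt G (fun w => (Num.max (f w) 1)^-1).
Proof.
move=> sG /(mwrtP _ _ sG) hf; apply/(mwrtP _ _ sG).
exact: (measurableT_comp (measurable_realfun.continuous_measurable_fun contV1) hf).
Qed.

End Mwrt.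
Section Bank.
Context {R : realType} {d : measure_display} {Omega : measurableType d}.
Variables (T : nat) (F : nat -> set (set Omega)) (r : nat -> Omega -> R).

Lemma bankS t w : bank r t.+1 w = bank r t w * (1 + r t.+1 w).
Proof. by rewrite /bank big_nat_recr. Qed.

Lemma bank0 w : bank r 0 w = 1.
Proof. by rewrite /bank big_geq. Qed.

Hypothesis r0 : forall t w, (1 <= t <= T)%N -> 0 <= r t w.

Lemma bank_ge1 t w : (t <= T)%N -> 1 <= bank r t w.
Proof.
elim: t => [|t IH] ht; first by rewrite bank0.
rewrite bankS; have h2 := IH (ltnW ht); have h1 : 0 <= r t.+1 w by apply: r0; rewrite ht.
 rewrite -[1]mulr1; apply: ler_pM => //; lra.
Qed.

Lemma bank_le M t w : (forall t w, (1 <= t <= T)%N -> `|r t w| <= M) ->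
  (t <= T)%N -> bank r t w <= (1 + M) ^+ t.
Proof.
move=> hM; elim: t => [|t IH] ht; first by rewrite bank0 expr0.
rewrite bankS exprSr; have := IH (ltnW ht).
have h0 : 0 <= r t.+1 w by apply: r0; rewrite ht.
have h1 : `|r t.+1 w| <= M by apply: hM; rewrite ht.
have hb := bank_ge1 t w (ltnW ht).
move=> h2; apply: ler_pM => //; first lra; first lra.
rewrite lerD2l; apply: le_trans h1; exact: ler_norm.
Qed.

Hypothesis hF : filtration T F.
Hypothesis hrm : forall t, (1 <= t <= T)%N -> measurable_wrt (F t.-1) (r t).

Lemma bank_mwrt t : (t <= T)%N -> measurable_wrt (F t) (bank r t).
Proof.
case: hF => sF subF mono.
elim: t => [|t IH] ht.
  have -> : bank r 0 = fun=> 1 by apply: funext => w; rewrite bank0.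
  exact: mwrt_cst (sF 0%N isT).
have -> : bank r t.+1 = fun w => bank r t w * (1 + r t.+1 w).
  by apply: funext => w; rewrite bankS.
have sT := sF _ ht.
apply: mwrtM => //.
  apply: mwrt_sub (IH (ltnW ht)); apply: mono; by rewrite leqnSn ht.
apply: (mwrtD _ (fun=> 1) (r t.+1) sT); first exact: mwrt_cst.
have := hrm t.+1; rewrite ht => /(_ isT) /= hr.
apply: mwrt_sub hr; apply: mono.
by rewrite leqnSn ht.
Qed.

End Bank.
Lemma sum_lt1 {R : realDomainType} (f g : nat -> R) m n t0 :
  (forall i, (m <= i < n)%N -> f i <= g i) -> (m <= t0 < n)%N -> f t0 < g t0 ->
  \sum_(m <= i < n) f i < \sum_(m <= i < n) g i.
Proof.
move=> hle /andP[h1 h2] hlt.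
rewrite (big_cat_nat h1 (ltnW h2)) (big_cat_nat h1 (ltnW h2)) /=.
rewrite (big_cat_nat (leqnSn t0) h2) (big_cat_nat (leqnSn t0) h2) /= !big_nat1.
apply: ler_ltD.
  apply: ler_sum_nat => i /andP[hi1 hi2]; apply: hle; rewrite hi1 /=.
  exact: leq_trans hi2 (ltnW h2).
apply: ltr_leD => //.
apply: ler_sum_nat => i /andP[hi1 hi2]; apply: hle; rewrite hi2 andbT.
exact: leq_trans h1 (ltnW hi1).
Qed.

Section Linf.
Context {R : realType} {d : measure_display} {Omega : measurableType d} (P : probability Omega R).

Lemma mwrtB (G : set (set Omega)) (f g : Omega -> R) : sigma_algebra setT G ->
  measurable_wrt G f -> measurable_wrt G g -> measurable_wrt G (fun w => f w - g w).
Proof.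
move=> sG /(mwrtP _ _ sG) hf /(mwrtP _ _ sG) hg; apply/(mwrtP _ _ sG).
exact: measurable_realfun.measurable_funB.
Qed.

Lemma LinftyD G f g : sigma_algebra setT G -> Linfty P G f -> Linfty P G g ->
  Linfty P G (fun w => f w + g w).
Proof.
move=> sG [mf [M hM]] [mg [N hN]]; split; first exact: mwrtD.
exists (M + N); apply: filterS2 hM hN => w h1 h2.
by rewrite (le_trans (ler_normD _ _)) // lerD.
Qed.

Lemma LinftyB G f g : sigma_algebra setT G -> Linfty P G f -> Linfty P G g ->
  Linfty P G (fun w => f w - g w).
Proof.
move=> sG [mf [M hM]] [mg [N hN]]; split; first exact: mwrtB.
exists (M + N); apply: filterS2 hM hN => w h1 h2.
by rewrite (le_trans (ler_normB _ _)) // lerD.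
Qed.

Lemma LinftyM G f g : sigma_algebra setT G -> Linfty P G f -> Linfty P G g ->
  Linfty P G (fun w => f w * g w).
Proof.
move=> sG [mf [M hM]] [mg [N hN]]; split; first exact: mwrtM.
exists (`|M| * `|N|); apply: filterS2 hM hN => w h1 h2.
rewrite normrM ler_pM //; apply: (le_trans _ (ler_norm _)) => //.
Qed.

Lemma Linfty_cst G c : sigma_algebra setT G -> Linfty P G (fun _ => c).
Proof. by move=> sG; split; [exact: mwrt_cst | exists `|c|; apply: nearW]. Qed.

Lemma Linfty_bdd G f K : measurable_wrt G f -> (forall w, `|f w| <= K) -> Linfty P G f.
Proof. by move=> mf hK; split => //; exists K; apply: nearW. Qed.

End Linf.

Section DCT.
Context {R : realType} {d : measure_display} {Omega : measurableType d} (P : probability Omega R).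

Lemma dct_lemma (phi : R -> R) (f h : Omega -> R) : continuous phi -> ebd P f -> ebd P h ->
  (fun n : nat => \int[P]_w (phi (f w + n.+1%:R^-1 * h w) * h w)) @ \oo -->
  \int[P]_w (phi (f w) * h w).
Proof.
move=> cphi ef eh.
have [mf [K1 hK1]] := ef; have [mh [K2 hK2]] := eh.
have [K3 hK3] := cont_bdd _ cphi (`|K1| + `|K2|).
pose fn (n : nat) (w : Omega) : R := phi (f w + n.+1%:R^-1 * h w) * h w.
pose fl (w : Omega) : R := phi (f w) * h w.
have efn n : ebd P (fn n).
  apply: ebdM => //; apply: ebd_comp => //; apply: ebdD => //.
  by apply: ebdM => //; exact: ebd_cst.
have efl : ebd P fl by apply: ebdM => //; exact: ebd_comp.
have mfn n : measurable_fun setT ((EFin \o fn n) : Omega -> \bar R).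
  by apply/measurable_realfun.measurable_EFinP; case: (efn n).
have mfl : measurable_fun setT ((EFin \o fl) : Omega -> \bar R).
  by apply/measurable_realfun.measurable_EFinP; case: efl.
have ig : P.-integrable setT (cst (K3 * `|K2|)%:E).
  exact: (@ebd_int _ _ _ P _ (ebd_cst P (K3 * `|K2|))).
have f_f : {ae P, forall x, setT x -> (EFin \o fn n) x @[n --> \oo] --> (EFin \o fl) x}.
  apply: nearW => x _; apply: cvg_EFin; first exact: nearW.
  rewrite /fn /fl /=.
  apply: cvgMl; apply: (continuous_cvg _ (cphi _)).
  rewrite -[X in _ --> X]addr0; apply: cvgD; first exact: cvg_cst.
  rewrite -(mul0r (h x)); apply: cvgMl.
  exact: (@cvg_harmonic R).
have f_g : {ae P, forall x n, setT x -> `|(EFin \o fn n) x| <= (cst (K3 * `|K2|)%:E) x}%E.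
  apply: filterS2 hK1 hK2 => w h1 h2 n _ /=; rewrite lee_fin /fn normrM.
  have he0 : 0 < n.+1%:R^-1 :> R by rewrite invr_gt0 ltr0n.
  have he1 : n.+1%:R^-1 <= 1 :> R by rewrite invf_le1 ?ltr0n // ler1n.
  have hh : `|h w| <= `|K2| by apply: le_trans h2 (ler_norm _).
  apply: ler_pM => //; apply: hK3.
  apply: (le_trans (ler_normD _ _)); apply: lerD; first exact: le_trans h1 (ler_norm _).
  rewrite normrM (ger0_norm (ltW he0)); apply: (le_trans _ hh).
  by rewrite -[leRHS]mul1r ler_wpM2r.
have [_ _ hc] := dominated_convergence measurableT mfn mfl f_f ig f_g.
rewrite /Rintegral; apply: fine_cvg; rewrite fineK; first exact: hc.
exact: integrable_fin_num (@ebd_int _ _ _ P _ efl).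
Qed.

End DCT.

Lemma near_all (Pn : nat -> nat -> Prop) m :
  (forall t, (1 <= t <= m)%N -> \forall n \near \oo, Pn t n) ->
  \forall n \near \oo, forall t, (1 <= t <= m)%N -> Pn t n.
Proof.
elim: m => [|m IH] h.
  by apply: nearW => n t /andP[h1 h2]; move: (leq_trans h1 h2).
have h1 := IH (fun t ht => h t (ltac:(case/andP: ht => a b; by rewrite a (leq_trans b (leqnSn m))))).
have h2 := h m.+1 (ltac:(by rewrite leqnn)).
apply: filterS2 h1 h2 => n H1 H2 t /andP[t1 t2].
rewrite leq_eqVlt in t2; case/orP: t2 => [/eqP -> //|t2].
by apply: H1; rewrite t1 -ltnS.
Qed.

Section Main.
Context {R : realType} {d : measure_display} {Omega : measurableType d} (P : probability Omega R).
Variables (T : nat) (F : nat -> set (set Omega)) (r : nat -> Omega -> R) (u : nat -> R -> R) (W : Omega -> R).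
Hypothesis hT : (1 <= T)%N.
Hypothesis hF : filtration T F.
Variable Mr : R.
Hypothesis hM : forall t w, (1 <= t <= T)%N -> `|r t w| <= Mr.
Hypothesis r0 : forall t w, (1 <= t <= T)%N -> 0 <= r t w.
Hypothesis hrm : forall t, (1 <= t <= T)%N -> measurable_wrt (F t.-1) (r t).
Hypothesis hu : forall t, (1 <= t <= T)%N -> strictly_concave (u t) /\ C1_increasing (u t).

Lemma u_cont t : (1 <= t <= T)%N -> continuous (u t).
Proof.
move=> /hu [_ [hd _]] x; apply: differentiable_continuous.
exact/derivable1_diffP.
Qed.

Lemma du_cont t : (1 <= t <= T)%N -> continuous (derive1 (u t)).
Proof. by move=> /hu [_ [_ []]]. Qed.

Lemma du_pos t x : (1 <= t <= T)%N -> 0 < derive1 (u t) x.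
Proof. by move=> /hu [_ [_ [_]]]. Qed.

Lemma u_tan t x y : (1 <= t <= T)%N ->
  u t y <= u t x + derive1 (u t) x * (y - x).
Proof. by move=> /hu [hc [hd _]]; apply: tangent_ineq. Qed.

Lemma Linfty_ebd G f : G `<=` measurable -> Linfty P G f -> ebd P f.
Proof. by move=> sub [mf hb]; split => //; exact: mwrt_meas mf. Qed.

Lemma disc_eq Y t w : (t <= T)%N ->
  disc r Y t w = Y t w * (Num.max (bank r t w) 1)^-1.
Proof.
move=> ht; rewrite /disc; congr (_ * _^-1).
have := bank_ge1 T r r0 t w ht; rewrite /Num.max; case: ifPn => // hlt h.
by move: (lt_le_trans hlt h); rewrite ltxx.
Qed.

Lemma discV_ebd t : (t <= T)%N -> ebd P (fun w => (Num.max (bank r t w) 1)^-1).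
Proof.
move=> ht; case: hF => sF subF _; split.
  apply: (mwrt_meas _ _ (subF t ht)); apply: (mwrtV1 _ _ (sF t ht)).
  exact: bank_mwrt hF hrm t ht.
exists 1; apply: nearW => w.
have h1 : 1 <= Num.max (bank r t w) 1 by rewrite le_max lexx orbT.
rewrite ger0_norm ?invr_ge0; last by apply: le_trans h1.
by rewrite invf_le1 // (lt_le_trans ltr01 h1).
Qed.

Lemma disc_ebd Y t : (t <= T)%N -> Linfty P (F T) (Y t) -> ebd P (disc r Y t).
Proof.
move=> ht hY; case: (hF) => sF subF _.
have -> : disc r Y t = fun w => Y t w * (Num.max (bank r t w) 1)^-1.
  by apply: funext => w; exact: disc_eq.
apply: ebdM; last exact: discV_ebd.
exact: (Linfty_ebd _ _ (subF T (leqnn T)) hY).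
Qed.

Lemma EU_fin Y t : (1 <= t <= T)%N -> Linfty P (F T) (Y t) ->
  expected_utility P u r Y t = (\int[P]_w u t (disc r Y t w))%:E.
Proof.
move=> /andP[t1 tT] hY; rewrite /expected_utility /Rintegral fineK //.
apply: integrable_fin_num => //; apply: ebd_int; apply: ebd_comp.
  by apply: u_cont; rewrite t1.
exact: disc_ebd.
Qed.

Lemma sumEU Y (lam : nat -> R) : admissible P T F r W Y ->
  (\sum_(1 <= t < T.+1) ((lam t)%:E * expected_utility P u r Y t))%E =
  (\sum_(1 <= t < T.+1) lam t * \int[P]_w u t (disc r Y t w))%:E.
Proof.
move=> [hY _]; rewrite -sumEFin; apply: eq_big_nat => t ht.
have ht' : (1 <= t <= T)%N by rewrite -ltnS.
by rewrite (@EU_fin Y t ht' (hY t ht').2).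
Qed.

Lemma solves_pareto X lam : (forall t, (1 <= t <= T)%N -> 0 < lam t) ->
  solves_P P T F r u W lam X -> pareto_optimal P T F r u W X.
Proof.
move=> hlam [hX hsol]; split => // -[Y [hY [hge [t0 [ht0 hlt]]]]].
have := hsol Y hY; rewrite !sumEU // lee_fin; apply/negP; rewrite -ltNge.
apply: (@sum_lt1 _ _ _ _ _ t0) => [t ht||].
- have ht' : (1 <= t <= T)%N by rewrite -ltnS.
  have := hge t ht'; rewrite (@EU_fin Y t ht' (hY.1 t ht').2).
  rewrite (@EU_fin X t ht' (hX.1 t ht').2) lee_fin.
  by move=> h; rewrite ler_pM2l // hlam.
- by rewrite ltnS.
- move: hlt; rewrite (@EU_fin Y t0 ht0 (hY.1 t0 ht0).2).
  rewrite (@EU_fin X t0 ht0 (hX.1 t0 ht0).2) lte_fin.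
  by move=> h; rewrite ltr_pM2l // hlam.
Qed.

Definition Zp (X Y : nat -> Omega -> R) (k : nat -> R) (e : R) : nat -> Omega -> R :=
  fun t w => X t w + e * (Y t w - X t w - k t * bank r t w).

Lemma disc_Z X Y k e t w : (t <= T)%N ->
  disc r (Zp X Y k e) t w = disc r X t w + e * (disc r Y t w - disc r X t w - k t).
Proof.
move=> ht; have hb : bank r t w != 0.
  by rewrite gt_eqF // (lt_le_trans ltr01) // (bank_ge1 T r r0 t w ht).
by rewrite /disc /Zp; field.
Qed.

Lemma bank_Linfty t : (t <= T)%N -> Linfty P (F T) (bank r t).
Proof.
move=> ht; case: (hF) => sF subF mono.
apply: (@Linfty_bdd _ _ _ _ _ _ ((1 + Mr) ^+ t)).
  apply: (mwrt_sub (F t) (F T)); first by apply: mono; rewrite ht leqnn.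
  exact: (bank_mwrt T F r hF hrm t ht).
move=> w; rewrite ger0_norm; last first.
  exact: le_trans ler01 (bank_ge1 T r r0 t w ht).
exact: (bank_le T r r0 Mr t w hM ht).
Qed.

Lemma Z_adm X Y k e : admissible P T F r W X -> admissible P T F r W Y ->
  \sum_(1 <= t < T.+1) k t = 0 -> admissible P T F r W (Zp X Y k e).
Proof.
move=> hX hY hk; split.
  move=> t ht; have [hXm hXL] := hX.1 t ht; have [hYm hYL] := hY.1 t ht.
  case: (hF) => sF subF mono; have htT : (t <= T)%N by case/andP: ht.
  have sFt := sF t htT; have sFT := sF T (leqnn T).
  split.
    apply: mwrtD => //; apply: mwrtM => //; first exact: mwrt_cst.
    apply: mwrtB => //; first exact: mwrtB.
    apply: mwrtM => //; first exact: mwrt_cst.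
    exact: (bank_mwrt T F r hF hrm t htT).
  apply: LinftyD => //; apply: LinftyM => //; first exact: Linfty_cst.
  apply: LinftyB => //; first exact: LinftyB.
  apply: LinftyM => //; first exact: Linfty_cst.
  exact: bank_Linfty.
apply: filterS2 hX.2 hY.2 => w hXs hYs.
rewrite (eq_big_nat _ _ (F2 := fun t => disc r X t w + e * (disc r Y t w - disc r X t w - k t))); last first.
  by move=> t ht; apply: disc_Z; rewrite -ltnS; case/andP: ht.
rewrite big_split /= -mulr_sumr !sumrB hXs hYs hk.
by rewrite subrr sub0r oppr0 mulr0 addr0.
Qed.

Lemma apos X t : (1 <= t <= T)%N -> Linfty P (F T) (X t) ->
  0 < \int[P]_w derive1 (u t) (disc r X t w).
Proof.
move=> ht hX; have htT : (t <= T)%N by case/andP: ht.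
have ef := @disc_ebd X t htT hX.
have [mf [K hK]] := ef.
have hm : - `|K| <= `|K| by rewrite (le_trans _ (normr_ge0 K)) // oppr_le0.
have cdu : {within `[- `|K|, `|K|], continuous (derive1 (u t))}.
  by apply: continuous_subspaceT; exact: du_cont.
have [c _ hc] := EVT_min hm cdu.
pose m : R := derive1 (u t) c.
have m0 : 0 < m by exact: du_pos.
have eg := @ebd_comp _ _ _ P _ _ (@du_cont t ht) ef.
have ig := @ebd_int _ _ _ P _ eg.
rewrite (lt_le_trans m0) //.
rewrite /Rintegral -lee_fin fineK; last exact: integrable_fin_num.
have -> : m%:E = (\int[P]_(x in setT) cst m%:E x)%E.
  by rewrite integral_cst //= probability_setT mule1.
apply: ae_ge0_le_integral => //.
- by move=> x _; rewrite lee_fin ltW.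
- by move=> x _; rewrite lee_fin ltW // du_pos.
- by case/integrableP: ig.
- apply: filterS hK => w hw _; rewrite lee_fin; apply: hc.
  by rewrite in_itv /= -ler_norml (le_trans hw) // ler_norm.
Qed.

Lemma improve X Y k t : (1 <= t <= T)%N -> Linfty P (F T) (X t) -> Linfty P (F T) (Y t) ->
  0 < \int[P]_w (derive1 (u t) (disc r X t w) * (disc r Y t w - disc r X t w - k t)) ->
  \forall n \near \oo, \int[P]_w u t (disc r X t w) <
     \int[P]_w u t (disc r (Zp X Y k (n.+1%:R^-1)) t w).
Proof.
move=> ht hX hY hpos; have htT : (t <= T)%N by case/andP: ht.
pose f := disc r X t.
pose h w := disc r Y t w - f w - k t.
have ef : ebd P f := @disc_ebd X t htT hX.
have eY : ebd P (disc r Y t) := @disc_ebd Y t htT hY.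
have eh : ebd P h.
  apply: ebdD; first by apply: ebdD => //; exact: ebdN.
  by apply: ebdN; exact: ebd_cst.
pose du := derive1 (u t).
have cdu : continuous du := @du_cont t ht.
have cu : continuous (u t) := @u_cont t ht.
pose G (n : nat) := \int[P]_w (du (f w + n.+1%:R^-1 * h w) * h w).
have hG : G n @[n --> \oo] --> \int[P]_w (du (f w) * h w) by exact: dct_lemma.
have hev := cvgr_gt _ hG 0 hpos.
near=> n.
have hGn : 0 < G n by near: n; exact: hev.
have he0 : 0 < n.+1%:R^-1 :> R by rewrite invr_gt0 ltr0n.
have hZ w : disc r (Zp X Y k (n.+1%:R^-1)) t w = f w + n.+1%:R^-1 * h w.
  by rewrite disc_Z.
under [X in _ < X]eq_Rintegral do rewrite hZ.
have e1 : ebd P (fun w => f w + n.+1%:R^-1 * h w).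
  by apply: ebdD => //; apply: ebdM => //; exact: ebd_cst.
have e2 : ebd P (fun w => du (f w + n.+1%:R^-1 * h w) * h w).
  by apply: ebdM => //; exact: ebd_comp.
apply: (@le_lt_trans _ _ (\int[P]_w (u t (f w + n.+1%:R^-1 * h w)
    - n.+1%:R^-1 * (du (f w + n.+1%:R^-1 * h w) * h w)))).
  apply: le_Rintegral => //.
  - by apply: ebd_int; exact: ebd_comp.
  - apply: ebd_int; apply: ebdD; first exact: ebd_comp.
    by apply: ebdN; apply: ebdM => //; exact: ebd_cst.
  - move=> w _; have H := @u_tan t (f w + n.+1%:R^-1 * h w) (f w) ht.
    apply: (le_trans H); rewrite -/du le_eqVlt; apply/orP; left; apply/eqP; ring.
rewrite RintegralB //; last 2 first.
  - by apply: ebd_int; exact: ebd_comp.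
  - by apply: ebd_int; apply: ebdM => //; exact: ebd_cst.
rewrite RintegralZl //; last exact: (@ebd_int _ _ _ P _ e2).
rewrite -/(G n) ltrBlDr ltrDl.
by rewrite mulr_gt0.
Unshelve. all: by end_near.
Qed.

Lemma pareto_solves X : pareto_optimal P T F r u W X ->
  solves_P P T F r u W (fun t => (\int[P]_w derive1 (u t) (disc r X t w))^-1) X.
Proof.
move=> [hX hpar]; split => // Y hY.
rewrite !sumEU // lee_fin.
pose a t := \int[P]_w derive1 (u t) (disc r X t w).
pose lam t := (a t)^-1.
pose dd t := \int[P]_w (derive1 (u t) (disc r X t w) * (disc r Y t w - disc r X t w)).
have ha t : (1 <= t <= T)%N -> 0 < a t by move=> ht; apply: apos => //; exact: (hX.1 t ht).2.
have hA t : (1 <= t <= T)%N ->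
    \int[P]_w u t (disc r Y t w) <= \int[P]_w u t (disc r X t w) + dd t.
  move=> ht; have htT : (t <= T)%N by case/andP: ht.
  have eX := @disc_ebd X t htT (hX.1 t ht).2.
  have eY := @disc_ebd Y t htT (hY.1 t ht).2.
  have cu := @u_cont t ht; have cdu := @du_cont t ht.
  rewrite /dd -RintegralD //; last 2 first.
    - by apply: ebd_int; exact: ebd_comp.
    - apply: ebd_int; apply: ebdM; first exact: ebd_comp.
      by apply: ebdD => //; exact: ebdN.
  apply: le_Rintegral => //.
  - by apply: ebd_int; exact: ebd_comp.
  - apply: ebd_int; apply: ebdD; first exact: ebd_comp.
    apply: ebdM; first exact: ebd_comp.
    by apply: ebdD => //; exact: ebdN.
  - by move=> w _; exact: u_tan.
suff hB : \sum_(1 <= t < T.+1) lam t * dd t <= 0.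
  apply: (@le_trans _ _ (\sum_(1 <= t < T.+1) (lam t * \int[P]_w u t (disc r X t w) + lam t * dd t))).
    apply: ler_sum_nat => t ht; have ht' : (1 <= t <= T)%N by rewrite -ltnS.
    by rewrite -mulrDr ler_pM2l ?invr_gt0 ?ha // hA.
  by rewrite big_split /= -[leRHS]addr0 lerD2l.
rewrite leNgt; apply/negP => hc.
set c := \sum_(1 <= t < T.+1) lam t * dd t in hc.
pose k t := lam t * dd t - c / T%:R.
have hk : \sum_(1 <= t < T.+1) k t = 0.
  have hT0 : T%:R != 0 :> R by rewrite pnatr_eq0 -lt0n.
  by rewrite sumrB sumr_const_nat subn1 /= -/c -[_ *+ T]mulr_natr mulfVK // subrr.
have hpos t : (1 <= t <= T)%N -> 0 < \int[P]_w (derive1 (u t) (disc r X t w) *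
    (disc r Y t w - disc r X t w - k t)).
  move=> ht; have htT : (t <= T)%N by case/andP: ht.
  have eX := @disc_ebd X t htT (hX.1 t ht).2.
  have eY := @disc_ebd Y t htT (hY.1 t ht).2.
  have cdu := @du_cont t ht.
  under eq_Rintegral do rewrite mulrBr.
  rewrite RintegralB //; last 2 first.
    - apply: ebd_int; apply: ebdM; first exact: ebd_comp.
      by apply: ebdD => //; exact: ebdN.
    - by apply: ebd_int; apply: ebdM; [exact: ebd_comp | exact: ebd_cst].
  rewrite RintegralZr //; last by apply: ebd_int; exact: ebd_comp.
  rewrite -/(dd t) -/(a t) /k /lam.
  have a0 := ha t ht.
  have -> : dd t - a t * ((a t)^-1 * dd t - c / T%:R) = a t * (c / T%:R).
    by field; apply/andP; split; [rewrite pnatr_eq0 -lt0n | rewrite gt_eqF].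
  by rewrite mulr_gt0 // divr_gt0 // ltr0n.
have hall := near_all _ T (fun t ht => @improve X Y k t ht (hX.1 t ht).2 (hY.1 t ht).2 (hpos t ht)).
have [n hn] := filter_ex hall.
apply: hpar; exists (Zp X Y k (n.+1%:R^-1)).
have hZ := @Z_adm X Y k (n.+1%:R^-1) hX hY hk.
split => //; split.
  move=> t ht; rewrite (@EU_fin X t ht (hX.1 t ht).2) (@EU_fin _ t ht (hZ.1 t ht).2).
  by rewrite lee_fin ltW // hn.
exists 1%N; have h1 : (1 <= 1 <= T)%N by rewrite leqnn hT.
split => //.
rewrite (@EU_fin X 1 h1 (hX.1 1%N h1).2) (@EU_fin _ 1 h1 (hZ.1 1%N h1).2).
by rewrite lte_fin hn.
Qed.

End Main.

Theorem theorem2p13 (R : realType) (d : measure_display) (Omega : measurableType d)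
  (P : probability Omega R) (T : nat) (F : nat -> set (set Omega))
  (r : nat -> Omega -> R) (u : nat -> R -> R) (W : Omega -> R)
  (X : nat -> Omega -> R) :
  (1 <= T)%N ->
  filtration T F ->
  (* r is bounded, nonnegative and predictable *)
  (exists M : R, forall t w, (1 <= t <= T)%N -> `|r t w| <= M) ->
  (forall t w, (1 <= t <= T)%N -> 0 <= r t w) ->
  (forall t, (1 <= t <= T)%N -> measurable_wrt (F t.-1) (r t)) ->
  (* utilities *)
  (forall t, (1 <= t <= T)%N -> strictly_concave (u t) /\ C1_increasing (u t)) ->
  Linfty P (F T) W ->
  admissible P T F r W X ->
  (pareto_optimal P T F r u W X <->
   exists lam : nat -> R, (forall t, (1 <= t <= T)%N -> 0 < lam t) /\
     solves_P P T F r u W lam X).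
Proof.
move=> hT hF [M hM] r0 hrm hu hW hX; split.
- move=> hpar; exists (fun t => (\int[P]_w derive1 (u t) (disc r X t w))^-1); split.
  + move=> t ht; rewrite invr_gt0.
    exact: (apos P T F r u hF r0 hrm hu X t ht (hX.1 t ht).2).
  + exact: (pareto_solves P T F r u W hT hF M hM r0 hrm hu X hpar).
- move=> [lam [hlam hsol]].
  exact: (solves_pareto P T F r u W hF r0 hrm hu X lam hlam hsol).
Qed.
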